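(* Let $n\ge 5$ and let $G$ be a graph on $n$ vertices with non-negative integer edge weights such that every subgraph spanned by at least $4$ vertices has total weight at least $3$. Then there is a vertex $v$ of $G$ with $d(v)\ge \tfrac{2}{3}n-\tfrac{4}{3}$.
   Context: The total weight of a subgraph is the sum of its edge weights; the subgraph spanned by a vertex set consists of those vertices and all edges between them. For a vertex $v$, $d(v)=\sum_{u\ne v}\operatorname{wt}(uv)$ is the sum of the weights of edges incident to $v$ (a missing edge has weight $0$). *)

(* Defs.v *)
From mathcomp Require Import all_boot.
Set Implicit Arguments. Unset Strict Implicit. Unset Printing Implicit Defensive.

(* A graph on vertex set 'I_n with non-negative integer edge weights:
   w u v is the weight of edge uv (0 = missing edge); w is symmetric,
   and values on the diagonal are ignored (no loops). *)
Definition sym_weight (n : nat) (w : 'I_n -> 'I_n -> nat) : Prop :=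
  forall u v, w u v = w v u.

Definition span_weight (n : nat) (w : 'I_n -> 'I_n -> nat) (S : {set 'I_n}) : nat :=
  \sum_(u in S) \sum_(v in S | u < v) w u v.

Definition wdeg (n : nat) (w : 'I_n -> 'I_n -> nat) (v : 'I_n) : nat :=
  \sum_(u | u != v) w u v.

(* Main.v *)
Require Import Defs.
From mathcomp Require Import all_boot.
From mathcomp Require Import zify.
Set Implicit Arguments. Unset Strict Implicit. Unset Printing Implicit Defensive.

Lemma sum_sub (I : finType) (P Q : pred I) (F : I -> nat) :
  (forall x, Q x -> P x) -> \sum_(x | Q x) F x <= \sum_(x | P x) F x.
Proof.
move=> h; rewrite [X in _ <= X](bigID Q) /=.
apply: leq_trans _ (leq_addr _ _).
rewrite leq_eqVlt; apply/orP; left; apply/eqP; apply: eq_bigl => x.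
by case Qx: (Q x); rewrite ?andbT ?andbF // h.
Qed.

Definition fw {n} (w : 'I_n -> 'I_n -> nat) (x y : 'I_n) := if x < y then w x y else 0.

Lemma fw_diag n (w : 'I_n -> 'I_n -> nat) (x : 'I_n) : fw w x x = 0.
Proof. by rewrite /fw ltnn. Qed.

Lemma fw_pair n (w : 'I_n -> 'I_n -> nat) (x y : 'I_n) : sym_weight w -> x != y -> fw w x y + fw w y x = w x y.
Proof.
move=> Hs hxy; rewrite /fw; case: ltngtP => h; rewrite ?addn0 ?add0n //; try exact: Hs; try by rewrite Hs.
by move: hxy; rewrite (val_inj h) eqxx.
Qed.

Lemma four n (w : 'I_n -> 'I_n -> nat) :
  sym_weight w ->
  (forall S : {set 'I_n}, 4 <= #|S| -> 3 <= span_weight w S) ->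
  forall a b c d : 'I_n, a != b -> a != c -> a != d -> b != c -> b != d -> c != d ->
  3 <= w a b + w a c + w a d + w b c + w b d + w c d.
Proof.
move=> Hs H4 a b c d hab hac had hbc hbd hcd.
have hba : b != a by rewrite eq_sym.
have hca : c != a by rewrite eq_sym.
have hda : d != a by rewrite eq_sym.
have hcb : c != b by rewrite eq_sym.
have hdb : d != b by rewrite eq_sym.
have hdc : d != c by rewrite eq_sym.
set S := a |: (b |: (c |: [set d])).
have cS : #|S| = 4.
  by rewrite !cardsU1 cards1 !inE (negbTE hab) (negbTE hac) (negbTE had)
    (negbTE hbc) (negbTE hbd) (negbTE hcd).
have := H4 S; rewrite cS => /(_ isT).
have heq : forall x : 'I_n, \sum_(v in S | x < v) w x v = \sum_(v in S) fw w x v.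
  by move=> x; rewrite big_mkcondr.
rewrite /span_weight (eq_bigr _ (fun x _ => heq x)).
have nA : a \notin b |: (c |: [set d]) by rewrite !inE negb_or (negbTE hab) (negbTE hac) (negbTE had).
have nB : b \notin c |: [set d] by rewrite !inE negb_or (negbTE hbc) (negbTE hbd).
have nC : c \notin [set d] by rewrite !inE.
rewrite !big_setU1 //= !big_set1 !fw_diag.
rewrite !big_setU1 //= !big_set1 !fw_diag.
move: (fw_pair Hs hab) (fw_pair Hs hac) (fw_pair Hs had).
move: (fw_pair Hs hbc) (fw_pair Hs hbd) (fw_pair Hs hcd).
clear; lia.
Qed.

Lemma triple n (w : 'I_n -> 'I_n -> nat) :
  5 <= n -> sym_weight w ->
  (forall S : {set 'I_n}, 4 <= #|S| -> 3 <= span_weight w S) ->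
  forall u v z : 'I_n, u != v -> z != v -> z != u -> w u v = 0 -> w z v = 0 -> w u z <= 1 ->
  exists y : 'I_n, 2 * n <= 3 * wdeg w y + 4.
Proof.
move=> Hn Hs H4 u v z huv hzv hzu wuv wzv wuz.
have hvu : v != u by rewrite eq_sym.
have hvz : v != z by rewrite eq_sym.
have huz : u != z by rewrite eq_sym.
set T := ~: (u |: (v |: [set z])).
have cT : #|T| = n - 3.
  have c3 : #|u |: (v |: [set z])| = 3.
    by rewrite !cardsU1 cards1 !inE (negbTE huv) (negbTE huz) (negbTE hvz).
  have := cardsC (u |: (v |: [set z])); rewrite card_ord c3 -/T; by move=> /(congr1 (fun m => m - 3)); rewrite addKn.
have inT : forall x, x \in T -> [/\ x != u, x != v & x != z].
  by move=> x; rewrite !inE !negb_or => /and3P.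
have key : forall x, x \in T -> 3 <= w u z + (w x u + w x v + w x z).
  move=> x /inT [hxu hxv hxz].
  have hux : u != x by rewrite eq_sym.
  have hvx : v != x by rewrite eq_sym.
  have hzx : z != x by rewrite eq_sym.
  have := four Hs H4 huv huz hux hvz hvx hzx.
  rewrite (Hs u x) (Hs v x) (Hs z x) (Hs v z) wuv wzv; lia.
have sumT : #|T| * 3 <= #|T| * w u z + (\sum_(x in T) w x u + \sum_(x in T) w x v + \sum_(x in T) w x z).
  rewrite -!sum_nat_const -!big_split /=.
  by apply: leq_sum.
have du : w z u + \sum_(x in T) w x u <= wdeg w u.
  rewrite /wdeg (bigD1 z hzu) /= leq_add2l.
  by apply: sum_sub => x /inT [-> _ ->].
have dz : w u z + \sum_(x in T) w x z <= wdeg w z.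
  rewrite /wdeg (bigD1 u huz) /= leq_add2l.
  by apply: sum_sub => x /inT [-> _ ->].
have dv : \sum_(x in T) w x v <= wdeg w v.
  by rewrite /wdeg; apply: sum_sub => x /inT [_ -> _].
have wzu : w z u = w u z by rewrite Hs.
rewrite wzu in du.
rewrite cT in sumT.
case: (leqP (2 * n) (3 * wdeg w u + 4)) => h1; first by exists u.
case: (leqP (2 * n) (3 * wdeg w v + 4)) => h2; first by exists v.
case: (leqP (2 * n) (3 * wdeg w z + 4)) => h3; first by exists z.
exfalso.
have [c0|c1] : w u z = 0 \/ w u z = 1 by lia.
- rewrite c0 in sumT du dz; lia.
- rewrite c1 in sumT du dz; lia.
Qed.

(* d(v) >= 2n/3 - 4/3  is written as  3 * d(v) + 4 >= 2 * n  over nat *)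
Theorem lemma7p6 (n : nat) (w : 'I_n -> 'I_n -> nat) :
  5 <= n ->
  sym_weight w ->
  (forall S : {set 'I_n}, 4 <= #|S| -> 3 <= span_weight w S) ->
  exists v : 'I_n, 2 * n <= 3 * wdeg w v + 4.
Proof.
move=> Hn Hs H4.
have n0 : 0 < n by lia.
set v := Ordinal n0.
set N := [set x | (x != v) && (w x v == 0)].
have hA : n - 1 <= wdeg w v + #|N|.
  have cN : #|N| = \sum_(x | x != v) (w x v == 0).
    rewrite -sum1_card big_mkcond [RHS]big_mkcond; apply: eq_bigr => x _.
    by rewrite inE; case: (x != v); case: (w x v == 0).
  have s1 : \sum_(x : 'I_n) 1 = n by rewrite sum1_card card_ord.
  rewrite (bigD1 v) //= in s1.
  have : \sum_(x | x != v) 1 <= wdeg w v + #|N|.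
    rewrite cN /wdeg -big_split /=; apply: leq_sum => x _.
    by case: (w x v).
  have e : \sum_(x | x != v) 1 = n - 1 by rewrite -[in RHS]s1 addKn.
  by rewrite e.
case: (leqP (3 * #|N|) (n + 1)) => hk.
  by exists v; lia.
have : N != set0 by rewrite -card_gt0; lia.
case/set0Pn => u uN.
have uN' := uN; rewrite inE in uN'; case/andP: uN' => huv /eqP wuv.
case: (boolP [exists z in N :\ u, w u z <= 1]).
  case/exists_inP => z; rewrite !inE => /and3P [hzu hzv /eqP wzv] wz.
  exact: (triple Hn Hs H4 huv hzv hzu wuv wzv wz).
rewrite negb_exists_in => /forall_inP hz.
exists u.
have : 2 * #|N :\ u| <= wdeg w u.
  apply: (@leq_trans (\sum_(z in N :\ u) w z u)).
    rewrite mulnC -sum_nat_const; apply: leq_sum => z zN.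
    by rewrite Hs ltnNge; apply: hz.
  rewrite /wdeg; apply: sum_sub => z; rewrite !inE => /andP [].
  done.
have := cardsD1 u N; rewrite uN.
lia.
Qed.
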